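(* Let $(X,\rho)$ be a compact metric space, $T\colon X\to X$ continuous, $d\ge2$, and $\lambda$ a non-atomic Borel probability measure on $X$ such that the product measure $\lambda_d$ on $X^d$ is conservative for $T_d=T\times\cdots\times T$. Then the set of $d$-tuples $(x_1,\dots,x_d)$ which are not asymptotic has full $\lambda_d$-measure.
   Context: A $d$-tuple $(x_1,\dots,x_d)$ is asymptotic if $\lim_{n\to\infty}\max_{i,j}\rho(T^n x_i,T^n x_j)=0$. A measure $m$ is conservative for a map $S$ if for every measurable $A$ with $m(A)>0$ there is $n>0$ with $m(A\cap S^n(A))>0$. *)

(* Defs.v *)
From HB Require Import structures.
From mathcomp Require Import all_boot all_order all_algebra.
From mathcomp Require Import all_classical all_reals all_analysis.
Set Implicit Arguments. Unset Strict Implicit. Unset Printing Implicit Defensive.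
Import Order.TTheory GRing.Theory Num.Theory.
Import numFieldNormedType.Exports.
Local Open Scope classical_set_scope.
Local Open Scope ring_scope.

(* g_sigma_algebraType needs a pointedType; metricType is not pointed, so we
   use an alias of X pointed at a given x0 (X carries a probability measure,
   hence is nonempty, so this costs nothing). *)
Section Pointed_alias.
Context (R : realType) (X : metricType R).
Definition ptd_metric (x0 : X) : Type := X.
Context (x0 : X).
HB.instance Definition _ := Choice.on (ptd_metric x0).
#[non_forgetful_inheritance]
HB.instance Definition _ := isPointed.Build (ptd_metric x0) x0.
End Pointed_alias.

Notation Borel X x0 :=
  (g_sigma_algebraType (@open X : set (set (@ptd_metric _ X x0)))).

Definition prodmap (X : Type) (d : nat) (T : X -> X) (t : d.-tuple X) : d.-tuple X :=
  map_tuple T t.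

Definition asymptotic (R : realType) (X : metricType R) (T : X -> X) (d : nat)
    (t : d.-tuple X) : Prop :=
  (fun n : nat => \big[Num.max/0]_(i < d) \big[Num.max/0]_(j < d)
      mdist (iter n T (tnth t i)) (iter n T (tnth t j))) @ \oo --> (0 : R).

(* Conservativity: for every measurable A with m(A) > 0 there is n > 0 with
   m(A cap S^n(A)) > 0.  Since S^n(A) need not be measurable, "m(B) > 0" for
   B = A cap S^n(A) is expressed as "B is not m-negligible" (i.e. positive
   outer/completed measure). *)
Definition conservative (dT : measure_display) (Y : measurableType dT) (R : realType)
    (m : set Y -> \bar R) (S : Y -> Y) : Prop :=
  forall A : set Y, measurable A -> (0 < m A)%E ->
    exists n : nat, (0 < n)%N /\ ~ m.-negligible (A `&` (iter n S) @` A).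

(* Main.v *)
Require Import Defs.
From HB Require Import structures.
From mathcomp Require Import all_boot all_order all_algebra.
From mathcomp Require Import all_classical all_reals all_analysis.
From mathcomp Require Import lra.
Import Order.TTheory GRing.Theory Num.Theory.
Import numFieldNormedType.Exports.
Local Open Scope classical_set_scope.
Local Open Scope ring_scope.

Section S.
Context (R : realType) (X : metricType R).

Lemma mball_open (c : X) (r : R) : open [set y | mdist c y < r].
Proof.
rewrite openE => x /= hx; rewrite /interior.
have e0 : 0 < r - mdist c x by rewrite subr_gt0.
move: (nbhsx_ballx x _ e0); apply: filterS => y; rewrite ballEmdist /= => hy.
rewrite (le_lt_trans (metric_triangle c x y))//.
by rewrite -ltrBrDl.
Qed.

Definition Xp (x0 : X) : Type := X.
Section XP.
Variable x0 : X.
HB.instance Definition _ := Topological.on (Xp x0).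
#[non_forgetful_inheritance]
HB.instance Definition _ := isPointed.Build (Xp x0) x0.
End XP.

Lemma net (x0 : X) (hX : compact [set: X]) (r : R) : 0 < r ->
  exists s : seq X, forall x : X, exists2 c, c \in s & mdist c x < r.
Proof.
move=> r0; have hc : @cover_compact (Xp x0) [set: X] by rewrite -compact_cover.
move: hc => /(_ X setT (fun c => [set y | mdist c y < r])).
case.
- by move=> i _; exact: mball_open.
- move=> x _; exists x => //=; by rewrite mdistxx.
move=> D' _ cov; exists (finmap.enum_fset D') => x; have [c /= cD hc] := cov x I.
by exists c.
Qed.

Lemma natSinv_lt (e : R) (e0 : 0 < e) : exists n : nat, n.+1%:R^-1 < e.
Proof.
have [N _ /(_ N (leqnn _)) h] := near_infty_natSinv_lt (PosNum e0).
by exists N.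
Qed.

Section M.
Context (x0 : X) (lam : probability (Borel X x0) R)
  (hna : forall x : X, lam [set x] = 0%E).

Lemma open_meas (A : set X) : open A -> measurable (A : set (Borel X x0)).
Proof. by move=> oA; apply: sub_sigma_algebra. Qed.

Lemma mball_meas (c : X) r : measurable ([set y | mdist c y < r] : set (Borel X x0)).
Proof. apply: open_meas; exact: mball_open. Qed.

Lemma small_ball_pt (x : X) (e : R) : 0 < e ->
  exists2 r, 0 < r & (lam [set y | (mdist x y < r)%R] < e%:E)%E.
Proof.
move=> e0.
pose F n := [set y : Borel X x0 | mdist x y < n.+1%:R^-1].
have mF n : measurable (F n) by apply: mball_meas.
have capF : \bigcap_n F n = [set x].
  apply/seteqP; split => y /=.
  - move=> h; change (y = x); apply: esym; apply: mdist_positivity; apply/eqP; rewrite eq_le mdist_ge0 andbT.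
    rewrite leNgt; apply/negP => hy; have [n hn] := natSinv_lt _ hy.
    have := h n I; rewrite /F /= => h'.
    by have := lt_trans h' hn; rewrite ltxx.
  - by move=> -> n _; rewrite /F /= mdistxx invr_gt0 ltr0n.
have h := @nonincreasing_cvg_mu _ _ R lam F
  (le_lt_trans (probability_le1 _ (mF 0%N)) (ltry _)) mF
  (bigcapT_measurable mF) _.
have {h} : (lam \o F) @ \oo --> 0%E.
  rewrite -(hna x) -capF; apply: h.
  move=> m n mn; apply/subsetPset => y; rewrite /F /= => hy.
  apply: (lt_le_trans hy); rewrite lef_pV2 ?posrE ?ltr0n// ler_nat ltnS//.
move/fine_cvgP => [hfin hcv].
have [N _ hN] := cvgr_lt _ hcv _ e0.
have [M _ hM] := hfin.
exists (maxn N M).+1%:R^-1; first by rewrite invr_gt0 ltr0n.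
have h1 := hN (maxn N M) (leq_maxl _ _).
have h2 := hM (maxn N M) (leq_maxr _ _).
move: h1 h2 => /=; rewrite /F.
by move=> h1 h2; rewrite -(fineK h2) lte_fin.
Qed.


Lemma seq_min_pos (T0 : eqType) (s : seq T0) (f : T0 -> R) :
  (forall x, 0 < f x) -> exists2 r, 0 < r & forall x, x \in s -> r <= f x.
Proof.
move=> fp; elim: s => [|a s [r r0 hr]]; first by exists 1.
exists (Num.min r (f a)); first by rewrite lt_min r0 fp.
move=> x; rewrite inE => /orP[/eqP->|xs]; first by rewrite ge_min lexx orbT.
by rewrite ge_min hr.
Qed.

Lemma small_ball (hX : compact [set: X]) (e : R) : 0 < e ->
  exists2 r, 0 < r & forall c : X, (lam [set y | (mdist c y < r)%R] < e%:E)%E.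
Proof.
move=> e0.
pose rx x := projT1 (cid2 (small_ball_pt x _ e0)).
have rx0 x : 0 < rx x by rewrite /rx; case: cid2.
have rxl x : (lam [set y | (mdist x y < rx x)%R] < e%:E)%E by rewrite /rx; case: cid2.
have hc : @cover_compact (Xp x0) [set: X] by rewrite -compact_cover.
have cv : [set: X] `<=` cover setT (fun x => [set y | mdist x y < rx x / 2]).
  move=> x _; exists x => //=; by rewrite mdistxx divr_gt0.
have [D' _ cov] := hc X setT (fun x => [set y | mdist x y < rx x / 2])
  (fun i _ => mball_open _ _) cv.
have [r r0 hr] := seq_min_pos _ (finmap.enum_fset D') (fun x => rx x / 2) (fun x => divr_gt0 (rx0 x) (ltr0Sn _ 1)).
exists r => // c.
have [x xD /= hx] := cov c I.
apply: le_lt_trans (rxl x); apply: le_measure; rewrite ?inE; try exact: mball_meas.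
move=> y /= hy.
apply: (le_lt_trans (metric_triangle x c y)).
rewrite [rx x]splitr; apply: ltrD => //.
exact: (lt_le_trans hy (hr x xD)).
Qed.

End M.

Lemma prod_le_sq (n : nat) (a : \bar R) : (2 <= n)%N -> (0 <= a)%E -> (a <= 1)%E ->
  (\prod_(i < n) a <= a * a)%E.
Proof.
move=> + a0 a1; elim: n => // n IH.
rewrite leq_eqVlt => /orP[/eqP <-|].
  by rewrite !big_ord_recr /= big_ord0 mul1e.
rewrite ltnS => /IH h; rewrite big_ord_recr /=.
apply: le_trans h; rewrite -[leRHS]mule1; apply: lee_wpmul2l => //.
exact: prode_ge0.
Qed.

Section Tup.
Context (x0 : X) (lam : probability (Borel X x0) R)
  (hna : forall x : X, lam [set x] = 0%E) (hX : compact [set: X])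
  (d : nat) (hd : (2 <= d)%N)
  (lamd : {measure set (d.-tuple (Borel X x0)) -> \bar R})
  (hprod : forall A : 'I_d -> set (Borel X x0), (forall i, measurable (A i)) ->
      lamd [set t | forall i, A i (tnth t i)] = (\prod_(i < d) lam (A i))%E).

Local Notation B := (Borel X x0).

Lemma tnth_pre (i : 'I_d) (A : set B) : measurable A ->
  measurable [set t : d.-tuple B | A (tnth t i)].
Proof.
by move=> mA; have := measurable_tnth i measurableT mA; rewrite setTI.
Qed.

Lemma rect_meas (A : 'I_d -> set B) : (forall i, measurable (A i)) ->
  measurable [set t : d.-tuple B | forall i, A i (tnth t i)].
Proof.
move=> mA.
have -> : [set t : d.-tuple B | forall i, A i (tnth t i)] =
    \big[setI/setT]_(i <- index_enum 'I_d) [set t : d.-tuple B | A i (tnth t i)].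
  rewrite -bigcap_seq; apply/seteqP; split => t /=.
  - by move=> h i _; exact: h.
  - by move=> h i; apply: h; rewrite /= mem_index_enum.
by apply: bigsetI_measurable => i _; exact: tnth_pre.
Qed.

Definition Diag := [set t : d.-tuple B | forall i j, tnth t i = tnth t j].

Lemma diag_small (e : R) : 0 < e ->
  exists Q, [/\ measurable Q, (lamd Q <= e%:E)%E & Diag `<=` Q].
Proof.
move=> e0.
have [r r0 hr] := small_ball x0 lam hna hX _ e0.
have [s hs] := net x0 hX _ r0.
pose bl k := [set y : B | (mdist (nth x0 s k) y < r)%R].
pose P k := bl k `\` \big[setU/set0]_(j < k) bl j.
have mbl k : measurable (bl k) by apply: mball_meas.
have mP k : measurable (P k).
  by apply: measurableD; [exact: mbl | apply: bigsetU_measurable => j _; exact: mbl].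
pose Rk k := [set t : d.-tuple B | forall i, P k (tnth t i)].
have mR k : measurable (Rk k) by exact: (rect_meas (fun _ => P k) (fun _ => mP k)).
exists (\big[setU/set0]_(k < size s) Rk k); split.
- by apply: bigsetU_measurable.
- have n_def : True by []. pose n := size s.
  apply: (le_trans (@content_subadditive _ _ _ lamd _ Rk n (fun k _ => mR k) _ (subset_refl _))).
    by apply: bigsetU_measurable.
  1: by [].
  have hRk k : lamd (Rk k) = (\prod_(i < d) lam (P k))%E := hprod (fun _ => P k) (fun _ => mP k).
  have lP k : (lam (P k) <= e%:E)%E.
    apply: (le_trans _ (ltW (hr (nth x0 s k)))); apply: le_measure; rewrite ?inE; [exact: mP|exact: mbl|].
    by move=> y [].
  apply: (@le_trans _ _ (\sum_(k < n) (lam (P k) * e%:E))%E).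
    apply: lee_sum => k _ /=. apply: (@le_trans _ _ (\prod_(i < d) lam (P k))%E); first by rewrite (hRk k).
    apply: (le_trans (prod_le_sq _ _ hd (measure_ge0 _ _) (probability_le1 _ (mP k)))).
    by apply: lee_wpmul2l; [exact: measure_ge0 | exact: lP].
  rewrite -ge0_sume_distrl; last by move=> k _; exact: measure_ge0.
  rewrite -[leRHS]mul1e; apply: lee_wpmul2r; first by rewrite lee_fin ltW.
  have triv : trivIset `I_n P.
    move=> i j _ _ [y [[hi ni] [hj nj]]].
    case: (ltngtP i j) => [ij|ij|//]; exfalso.
    + by apply: nj; rewrite -bigcup_mkord; exists i.
    + by apply: ni; rewrite -bigcup_mkord; exists j.
  rewrite -measure_semi_additive_ord_I //.
  + by apply: probability_le1; apply: bigsetU_measurable => k _; exact: mP.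
  + by apply: bigsetU_measurable => k _; exact: mP.
- move=> t Dt.
  have i0 : 'I_d by exists 0%N; apply: leq_trans hd.
  set y := tnth t i0.
  have ex : exists k, (k < size s)%N && (mdist (nth x0 s k) y < r).
    have [c cs hc] := hs y; exists (index c s).
    by rewrite index_mem cs nth_index.
  case: (ex_minnP ex) => k /andP[ks hk] hmin.
  rewrite -bigcup_mkord; exists k => // i.
  rewrite (Dt i i0); split => //.
  rewrite -bigcup_mkord => -[j /= jk]; rewrite /bl /= => hj.
  have := hmin j; rewrite hj (ltn_trans jk ks) /= => /(_ isT).
  by rewrite leqNgt jk.
Qed.


Lemma invS_gt0 (n : nat) : 0 < n.+1%:R^-1 :> R.
Proof. by rewrite invr_gt0 ltr0Sn. Qed.

Lemma le_all_inv0 (a : \bar R) : (0 <= a)%E ->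
  (forall n : nat, (a <= (n.+1%:R^-1)%:E)%E) -> a = 0%E.
Proof.
move=> a0 h; have afin : a \is a fin_num.
  rewrite ge0_fin_numE //; apply: le_lt_trans (h 0%N) _; exact: ltry.
rewrite -(fineK afin) in a0 h *; congr (_%:E).
move: a0; rewrite lee_fin le_eqVlt => /orP[/eqP<-//|ap].
have [n hn] := natSinv_lt _ ap.
by have := h n; rewrite lee_fin leNgt hn.
Qed.

Lemma diag_negl : lamd.-negligible Diag.
Proof.
pose Q n := projT1 (cid (diag_small _ (invS_gt0 n))).
have hQ n : [/\ measurable (Q n), (lamd (Q n) <= (n.+1%:R^-1)%:E)%E & Diag `<=` Q n].
  by rewrite /Q; case: cid.
have mQ n : measurable (Q n) by case: (hQ n).
exists (\bigcap_n Q n); split.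
- exact: bigcapT_measurable.
- apply: le_all_inv0; first exact: measure_ge0.
  move=> n; have [_ h _] := hQ n; apply: le_trans h.
  apply: le_measure; rewrite ?inE; [exact: bigcapT_measurable| exact: mQ|].
  exact: bigcap_inf.
- by move=> t Dt n _; have [_ _ h] := hQ n; exact: h.
Qed.


Lemma cont_pre (g : X -> X) (hg : continuous g) (c : X) (r : R) :
  measurable ([set y | mdist c (g y) < r] : set B).
Proof.
apply: open_meas; have := (continuousP g).1 hg _ (mball_open c r); exact.
Qed.

Definition netk (k : nat) : seq X := projT1 (cid (net x0 hX _ (invS_gt0 k))).
Lemma netkP k (x : X) : exists2 c, c \in netk k & mdist c x < k.+1%:R^-1.
Proof. by rewrite /netk; case: cid => s /= hs; exact: hs. Qed.

Lemma dist_meas (g : X -> X) (hg : continuous g) (i j : 'I_d) (r : R) :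
  measurable [set t : d.-tuple B | mdist (g (tnth t i)) (g (tnth t j)) < r].
Proof.
pose dk (k : nat) : R := k.+1%:R^-1.
pose piece k p q := if mdist (nth x0 (netk k) p) (nth x0 (netk k) q) < r - 2 * dk k
  then [set t : d.-tuple B | mdist (nth x0 (netk k) p) (g (tnth t i)) < dk k]
    `&` [set t : d.-tuple B | mdist (nth x0 (netk k) q) (g (tnth t j)) < dk k]
  else set0.
have -> : [set t : d.-tuple B | mdist (g (tnth t i)) (g (tnth t j)) < r] =
    \bigcup_k \bigcup_p \bigcup_q piece k p q.
  apply/seteqP; split => t /=.
  - move=> h.
    have h0 : 0 < (r - mdist (g (tnth t i)) (g (tnth t j))) / 4.
      by apply: divr_gt0 => //; rewrite subr_gt0.
    have [k hk] := natSinv_lt _ h0.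
    have [a an ha] := netkP k (g (tnth t i)).
    have [b bn hb] := netkP k (g (tnth t j)).
    exists k => //; exists (index a (netk k)) => //; exists (index b (netk k)) => //.
    rewrite /piece !nth_index //.
    have -> : mdist a b < r - 2 * dk k.
      apply: (le_lt_trans (metric_triangle a (g (tnth t i)) b)).
      have := metric_triangle (g (tnth t i)) (g (tnth t j)) b.
      rewrite (metric_sym b) in hb.
      rewrite /dk; set δ := k.+1%:R^-1 in ha hb hk *; lra.
    by split.
  - move=> [k _ [p _ [q _]]]; rewrite /piece.
    case: ifP => // hab [/= ha hb].
    have h1 := metric_triangle (g (tnth t i)) (nth x0 (netk k) p) (g (tnth t j)).
    have h2 := metric_triangle (nth x0 (netk k) p) (nth x0 (netk k) q) (g (tnth t j)).
    have h3 := metric_sym (g (tnth t i)) (nth x0 (netk k) p).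
    rewrite /dk in ha hb hab; set δ := k.+1%:R^-1 in ha hb hab; lra.
apply: bigcupT_measurable => k; apply: bigcupT_measurable => p;
  apply: bigcupT_measurable => q.
rewrite /piece; case: ifP => _ //.
have m1 := tnth_pre i _ (cont_pre _ hg (nth x0 (netk k) p) (dk k)).
have m2 := tnth_pre j _ (cont_pre _ hg (nth x0 (netk k) q) (dk k)).
exact: (measurableI _ _ m1 m2).
Qed.


Lemma in_bigsetI (I : choiceType) (s : seq I) (F : I -> set (d.-tuple B)) t :
  (\big[setI/setT]_(i <- s) F i) t <-> forall i, i \in s -> F i t.
Proof.
rewrite -(bigcap_seq s F); split => [h i si|h i /= si]; [exact: h| exact: h].
Qed.

Section Main.
Context (T : X -> X) (hT : continuous T)
  (hcons : conservative lamd (@prodmap B d T)).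

Local Notation S := (@prodmap B d T).

Lemma iter_S n (t : d.-tuple B) i : tnth (iter n S t) i = iter n T (tnth t i).
Proof. by elim: n => //= n IH; rewrite /prodmap tnth_map IH. Qed.

Definition Dn n (t : d.-tuple B) : R := \big[Num.max/0]_(i < d) \big[Num.max/0]_(j < d)
      mdist (iter n T (tnth t i)) (iter n T (tnth t j)).

Lemma Dn_S n m t : Dn n (iter m S t) = Dn (n + m) t.
Proof.
rewrite /Dn; apply: eq_bigr => i _; apply: eq_bigr => j _.
by rewrite !iter_S !iterD.
Qed.

Lemma Dn_lt n t e : 0 < e ->
  Dn n t < e <-> forall i j, mdist (iter n T (tnth t i)) (iter n T (tnth t j)) < e.
Proof.
move=> e0; rewrite /Dn; split.
- move/bigmax_ltP => [_ h] i j; have /bigmax_ltP [_ h'] := h i isT; exact: h'.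
- move=> h; apply/bigmax_ltP; split => // i _; apply/bigmax_ltP; split => // j _.
Qed.

Lemma cont_iter n : continuous (iter n T).
Proof.
elim: n => [|n IH] x /=; first exact: cvg_id.
exact: (continuous_comp (IH x) (hT _)).
Qed.

Lemma Dlt_meas n e : 0 < e -> measurable [set t | Dn n t < e].
Proof.
move=> e0.
have -> : [set t | Dn n t < e] = \big[setI/setT]_(i <- index_enum 'I_d)
   \big[setI/setT]_(j <- index_enum 'I_d)
     [set t : d.-tuple B | mdist (iter n T (tnth t i)) (iter n T (tnth t j)) < e].
  apply/seteqP; split => t /=.
  - move/(Dn_lt _ _ _ e0) => h; apply/in_bigsetI => i _; apply/in_bigsetI => j _.
    exact: h.
  - move=> h; apply/(Dn_lt _ _ _ e0) => i j.
    by move/in_bigsetI: h => /(_ i (mem_index_enum _)) /in_bigsetI /(_ j (mem_index_enum _)).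
apply: bigsetI_measurable => i _; apply: bigsetI_measurable => j _.
exact: dist_meas (cont_iter n) i j e.
Qed.

Definition U m k := ~` [set t | Dn k t < m.+1%:R^-1] `&`
  \bigcap_(n in [set n | (k < n)%N]) [set t | Dn n t < m.+1%:R^-1].

Lemma U_meas m k : measurable (U m k).
Proof.
apply: measurableI; first exact: (measurableC (Dlt_meas k _ (invS_gt0 m))).
apply: bigcap_measurableType => n _; exact: (Dlt_meas n _ (invS_gt0 m)).
Qed.

Lemma U_null m k : lamd (U m k) = 0%E.
Proof.
apply/eqP; rewrite eq_le measure_ge0 andbT leNgt; apply/negP => pos.
have [n [n0 hn]] := hcons _ (U_meas m k) pos.
apply: hn.
suff -> : U m k `&` iter n S @` U m k = set0 by exact: negligible_set0.
apply/seteqP; split => // x [[hx1 _] [u [_ hu2] hux]].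
apply: hx1; rewrite -hux /= Dn_S; apply: hu2 => /=.
by rewrite -{1}(addn0 k) ltn_add2l.
Qed.


Lemma main_ae : {ae lamd, forall t : d.-tuple B, ~ @asymptotic R X T d t}.
Proof.
have h : lamd.-negligible (Diag `|` \bigcup_m \bigcup_k U m k).
  apply: negligibleU; first exact: diag_negl.
  apply: negligible_bigcup => m; apply: negligible_bigcup => k.
  by apply/negligibleP; [exact: U_meas | exact: U_null].
apply: (negligibleS _ h) => t /= /contrapT hasym.
have [Dt|nDt] := pselect (Diag t); first by left.
right.
have [i [j hij]] : exists i j, tnth t i <> tnth t j.
  apply: contrapT => nex; apply: nDt => i j; apply: contrapT => ne; apply: nex.
  by exists i, j.
have dpos : 0 < mdist (tnth t i) (tnth t j) by rewrite mdist_gt0; apply/eqP.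
have [m hm] := natSinv_lt _ dpos.
set e := m.+1%:R^-1 in hm.
have e0 : 0 < e by exact: invS_gt0.
have nD0 : ~~ (Dn 0 t < e).
  apply/negP => /(Dn_lt _ _ _ e0) /(_ i j) /= hh.
  by have := lt_trans hh hm; rewrite ltxx.
have [N _ hN] := cvgr_lt _ hasym _ e0.
have exP : exists k, ~~ (Dn k t < e) by exists 0%N.
have bnd : forall k, ~~ (Dn k t < e) -> (k <= N)%N.
  move=> k hk; rewrite leqNgt; apply/negP => Nk.
  by move/negP: hk; apply; exact: (hN k (ltnW Nk)).
case: (ex_maxnP exP bnd) => k hk hmax.
exists m => //; exists k => //; split; first by move/negP: hk.
move=> n /= kn; case: (boolP (Dn n t < e)) => // hn.
by have := hmax n hn; rewrite leqNgt kn.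
Qed.

End Main.
End Tup.
End S.

Theorem mainTheorem7 (R : realType) (X : metricType R) (T : X -> X) (d : nat)
  (hX : compact [set: X]) (hT : continuous T) (hd : (2 <= d)%N) (x0 : X)
  (lam : probability (Borel X x0) R)
  (hnonatomic : forall x : X, lam [set x] = 0%E)
  (lamd : {measure set (d.-tuple (Borel X x0)) -> \bar R})
  (hprod : forall A : 'I_d -> set (Borel X x0), (forall i, measurable (A i)) ->
      lamd [set t | forall i, A i (tnth t i)] = (\prod_(i < d) lam (A i))%E)
  (hcons : conservative lamd (@prodmap (Borel X x0) d T)) :
  {ae lamd, forall t : d.-tuple (Borel X x0), ~ @asymptotic R X T d t}.
Proof. exact: (@main_ae R X x0 lam hnonatomic hX d hd lamd hprod T hT hcons). Qed.
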